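(* Let $Y\in\{0,1\}$ be a binary random label with $0<P(Y=1)<1$, and let $X=(\mathbf{x}_1,\dots,\mathbf{x}_M)$ be a bag of $M$ random instances which are conditionally independent given $Y$, each having a conditional density $p(\mathbf{x}_m\mid Y)$. Let $I\subseteq\{1,\dots,M\}$ be the set of informative instances, with $|I|=\tilde M\ge 1$, where every uninformative instance $m\notin I$ satisfies $p(\mathbf{x}_m\mid Y=1)=p(\mathbf{x}_m\mid Y=0)$. Set $u_m=1$ if $m\in I$ and $u_m=0$ otherwise. Let $g$ be a real-valued function with $\sigma(g(\mathbf{x}_m))=P(Y=1\mid \mathbf{x}_m)$ for every $m\in I$, where $\sigma(t)=1/(1+e^{-t})$, and define $$f(X)=\frac{1}{\tilde M}\sum_{m=1}^{M} g(\mathbf{x}_m)\,u_m .$$ Then $$\operatorname{logit}(Y=1\mid X)=\tilde M\, f(X)+C,$$ where $\operatorname{logit}(Y=1\mid X)=\log\frac{P(Y=1\mid X)}{P(Y=0\mid X)}$ and $C$ is a constant that does not depend on $X$ (it depends only on $\tilde M$ and the prior $P(Y=1)$).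
   Context: In the paper, $g=g_{\boldsymbol\theta}$ is a neural network whose sigmoid output $\sigma(g(\mathbf{x}))$ is interpreted as the probability that a bag (whole-slide image) is malignant given a single instance (image patch) $\mathbf{x}$, and $f(X)$ is the slide-level prediction obtained by averaging $g$ over the $\tilde M$ instances identified as informative. For a probability $P(\cdot)$, $\operatorname{logit}(\cdot)=\log\big(P(\cdot)/(1-P(\cdot))\big)$. *)

(* Defs.v *)
From mathcomp Require Import all_boot all_order all_algebra.
From mathcomp Require Import all_classical all_reals all_analysis.
Set Implicit Arguments. Unset Strict Implicit. Unset Printing Implicit Defensive.
Import Order.TTheory GRing.Theory Num.Theory.
Local Open Scope ring_scope.

Section Defs.
Variables (R : realType).

Definition sigmoid (t : R) : R := 1 / (1 + expR (- t)).

Definition logit (p : R) : R := ln (p / (1 - p)).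

Variables (T : Type) (M : nat).
(* prior P(Y=1) = pi; class-conditional instance densities
   p true m t = p(x_m = t | Y = 1),  p false m t = p(x_m = t | Y = 0). *)
Variables (pi : R) (p : bool -> 'I_M -> T -> R).

Definition post_inst (m : 'I_M) (t : T) : R :=
  pi * p true m t / (pi * p true m t + (1 - pi) * p false m t).

(* Bayes' rule for the bag, using conditional independence given Y:
   the class-conditional joint density of X is the product of the
   instance densities.  P(Y=1 | X = x) *)
Definition post_bag (x : 'I_M -> T) : R :=
  pi * (\prod_m p true m (x m)) /
  (pi * (\prod_m p true m (x m)) + (1 - pi) * \prod_m p false m (x m)).

Definition u (I : {set 'I_M}) (m : 'I_M) : R := (m \in I)%:R.

Definition f_bag (I : {set 'I_M}) (g : T -> R) (x : 'I_M -> T) : R :=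
  (#|I|%:R)^-1 * \sum_m g (x m) * u I m.

End Defs.

(* Main.v *)
Require Import Defs.
From mathcomp Require Import all_boot all_order all_algebra.
From mathcomp Require Import all_classical all_reals all_analysis.
From mathcomp Require Import ring lra.
Import Order.TTheory GRing.Theory Num.Theory.
Local Open Scope ring_scope.

Lemma expR_g (R : realType) (a p1 p0 gv : R) :
  0 < a < 1 -> 0 < p1 -> 0 < p0 ->
  sigmoid gv = a * p1 / (a * p1 + (1 - a) * p0) ->
  expR gv = (a / (1 - a)) * (p1 / p0).
Proof.
move=> /andP[a0 a1] h1 h0; rewrite /sigmoid => h.
have A0 : 0 < a * p1 by rewrite mulr_gt0.
have B0 : 0 < (1 - a) * p0 by rewrite mulr_gt0 // subr_gt0.
have E0 : 0 < expR (- gv) by rewrite expR_gt0.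
have hE : 1 + expR (- gv) = (a * p1 + (1 - a) * p0) / (a * p1).
  have := congr1 GRing.inv h; rewrite div1r invrK => ->.
  by rewrite invf_div.
have hE' : expR (- gv) = (1 - a) * p0 / (a * p1).
  apply: (addrI 1); rewrite hE mulrDl divff ?gt_eqF //.
rewrite -[gv]opprK expRN hE' invf_div.
field; rewrite ?gt_eqF ?subr_gt0 //.
Qed.

Theorem proposition1 (R : realType) (T : Type) (M : nat)
  (pi : R) (p : bool -> 'I_M -> T -> R) (I : {set 'I_M}) (g : T -> R) :
  0 < pi < 1 ->
  (0 < #|I|)%N ->
  (forall m : 'I_M, m \notin I -> forall t : T, p true m t = p false m t) ->
  exists C : R, forall x : 'I_M -> T,
    (forall (y : bool) (m : 'I_M), 0 < p y m (x m)) ->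
    (forall m : 'I_M, m \in I -> sigmoid (g (x m)) = post_inst pi p m (x m)) ->
    logit (post_bag pi p x) = #|I|%:R * f_bag I g x + C.
Proof.
move=> hpi hI hun.
have /andP[a0 a1] := hpi.
set q := pi / (1 - pi).
have q0 : 0 < q by rewrite divr_gt0 // subr_gt0.
exists (ln q - ln (q ^+ #|I|)) => x hp hs.
rewrite -[RHS]expRK; congr ln.
rewrite expRD expRB !lnK ?posrE ?exprn_gt0 //.
have -> : #|I|%:R * f_bag I g x = \sum_(m in I) g (x m).
  rewrite /f_bag mulrA divff ?pnatr_eq0 -?lt0n // mul1r.
  rewrite (big_mkcond (fun m => m \in I)) /=; apply: eq_bigr => m _.
  by rewrite /u; case: (m \in I); rewrite ?mulr1 ?mulr0.
rewrite expR_sum.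
under eq_bigr => m mI.
  rewrite (@expR_g R _ _ _ _ hpi (hp true m) (hp false m) (hs m mI)).
over.
rewrite big_split /= prodr_const.
have -> : \prod_(m in I) (p true m (x m) / p false m (x m)) =
          \prod_m (p true m (x m) / p false m (x m)).
  rewrite big_mkcond /=; apply: eq_bigr => m _.
  case: ifP => // /negbT mI; rewrite (hun m mI) divff // gt_eqF //.
rewrite big_split /= prodfV.
have P1 : 0 < \prod_m p true m (x m) by apply: prodr_gt0 => m _; apply: hp.
have P0 : 0 < \prod_m p false m (x m) by apply: prodr_gt0 => m _; apply: hp.
have qn : 0 < q ^+ #|I| by rewrite exprn_gt0.
rewrite /post_bag /q.
move: P1 P0 qn; rewrite /q.
set A := \prod_m p true m (x m); set B := \prod_m p false m (x m).
set Q := (pi / (1 - pi)) ^+ #|I| => P1 P0 qn.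
have S0 : 0 < pi * A + (1 - pi) * B by rewrite addr_gt0 ?mulr_gt0 ?subr_gt0.
move: A B Q P1 P0 qn S0 => A B Q P1 P0 qn S0.
have D : pi * A + (1 - pi) * B != 0 by rewrite gt_eqF.
have D2 : 1 - pi != 0 by rewrite gt_eqF // subr_gt0.
have -> : 1 - pi * A / (pi * A + (1 - pi) * B) = (1 - pi) * B / (pi * A + (1 - pi) * B).
  by apply: (mulIf D); rewrite mulrBl !divfK // mul1r addrC addKr.
field; rewrite ?gt_eqF ?subr_gt0 //.
Qed.
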